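(* Let $H:\mathbb{R}^n\rightrightarrows\mathbb{R}^n$ be a closed convex process such that $\mathcal{F}(H)^-\cap\operatorname{cl}(\mathcal{F}(H^+))=\{0\}$. If $V\in\mathcal{V}$ is a weak Lyapunov function for $H$, then $W:=(V|_{\mathcal{F}(H)})^\star$ is a strong Lyapunov function for $H^+$.
   Context: A set-valued map $H:\mathbb{R}^n\rightrightarrows\mathbb{R}^n$ is a convex process if its graph $\{(x,y)\mid y\in H(x)\}$ is a convex cone, and closed if the graph is closed. For a set-valued map $G$, a trajectory is a sequence $(x_k)_{k\ge0}$ with $x_{k+1}\in G(x_k)$ for all $k\ge0$, and $\mathcal{F}(G)$ is the set of $\xi$ such that some trajectory has $x_0=\xi$. The positive dual process is defined by $p\in H^+(q)\iff\langle p,x\rangle\le\langle q,y\rangle$ for all $(x,y)\in\operatorname{graph}(H)$. For a set $\mathcal{C}$, $\mathcal{C}^-=\{y\mid\langle x,y\rangle\le0\ \forall x\in\mathcal{C}\}$; $\operatorname{cl}$ denotes closure. $\mathcal{V}$ is the set of extended real-valued functions $f:\mathbb{R}^n\to\mathbb{R}\cup\{\pm\infty\}$ that are closed and convex (closed convex epigraph), positive semi-definite ($f(0)=0$, $f\ge0$) and positively homogeneous of degree 2 ($f(\lambda x)=\lambda^2f(x)$ for $\lambda\ge0$). For a convex cone $\mathcal{C}$, $f\in\mathcal{V}$ is positive definite with respect to $\mathcal{C}$ if there exist $0<\alpha\le\beta<\infty$ with $\alpha\|x\|^2\le f(x)\le\beta\|x\|^2$ for all $x\in\mathcal{C}$.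 $f|_{\mathcal{C}}(x)=f(x)$ if $x\in\mathcal{C}$ and $+\infty$ otherwise; $f^\star(y)=\sup_x\{y\cdot x-f(x)\}$ is the convex conjugate. For a convex process $G$: $V\in\mathcal{V}$ is a weak Lyapunov function for $G$ if $V$ is positive definite with respect to $\mathcal{F}(G)$ and there is $\gamma\in(0,1)$ such that for every $x\in\mathcal{F}(G)$ there exists $y\in\mathcal{F}(G)\cap G(x)$ with $V(y)\le\gamma V(x)$; $V\in\mathcal{V}$ is a strong Lyapunov function for $G$ if $V$ is positive definite with respect to $\mathcal{F}(G)$ and there is $\gamma\in(0,1)$ such that for every $x\in\mathcal{F}(G)$ and every $y\in\mathcal{F}(G)\cap G(x)$, $V(y)\le\gamma V(x)$. *)

(* Defs.v *)
From HB Require Import structures.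
From mathcomp Require Import all_boot all_order all_algebra.
From mathcomp Require Import all_classical all_reals all_analysis.
Set Implicit Arguments. Unset Strict Implicit. Unset Printing Implicit Defensive.
Import Order.TTheory GRing.Theory Num.Theory.
Import numFieldNormedType.Exports.
Local Open Scope classical_set_scope.
Local Open Scope ring_scope.

Section Defs.
Variables (R : realType) (n : nat).
Notation vec := 'rV[R]_n.

Definition dot (x y : vec) : R := \sum_(i < n) x 0 i * y 0 i.

Definition setmap := vec -> set vec.

Definition graph (H : setmap) : set (vec * vec) := [set xy | H xy.1 xy.2].

Definition is_convex_cone {V : lmodType R} (C : set V) : Prop :=
  C 0 /\ (forall x, C x -> forall l : R, 0 <= l -> C (l *: x))
      /\ (forall x y, C x -> C y -> C (x + y)).

Definition convex_process (H : setmap) : Prop :=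
  is_convex_cone (graph H).

Definition closed_process (H : setmap) : Prop := closed (graph H).

Definition feasible (G : setmap) : set vec :=
  [set xi | exists x : nat -> vec, x 0%N = xi /\ forall k, G (x k) (x k.+1)].

Definition dual_process (H : setmap) : setmap :=
  fun q => [set p | forall x y, H x y -> dot p x <= dot q y].

Definition polar (C : set vec) : set vec :=
  [set y | forall x, C x -> dot x y <= 0].

Definition epigraph (f : vec -> \bar R) : set (vec * R) :=
  [set xt | (f xt.1 <= xt.2%:E)%E].

Definition convex_set {V : lmodType R} (C : set V) : Prop :=
  forall x y, C x -> C y -> forall l : R, 0 <= l -> l <= 1 ->
    C (l *: x + (1 - l) *: y).

Definition in_calV (f : vec -> \bar R) : Prop :=
  [/\ closed (epigraph f), convex_set (epigraph f),
      f 0 = 0%E, (forall x, (0 <= f x)%E) &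
      (forall (l : R) x, 0 <= l -> f (l *: x) = ((l ^+ 2)%:E * f x)%E)].

Definition pos_def_wrt (C : set vec) (f : vec -> \bar R) : Prop :=
  exists alpha beta : R, [/\ 0 < alpha, alpha <= beta &
    forall x, C x -> ((alpha * dot x x)%:E <= f x)%E /\
                     (f x <= (beta * dot x x)%:E)%E].

Definition restr_to (f : vec -> \bar R) (C : set vec) : vec -> \bar R :=
  fun x => if x \in C then f x else +oo%E.

Definition conjugate (f : vec -> \bar R) : vec -> \bar R :=
  fun y => ereal_sup [set ((dot y x)%:E - f x)%E | x in setT].

Definition weak_lyapunov (G : setmap) (V : vec -> \bar R) : Prop :=
  [/\ in_calV V, pos_def_wrt (feasible G) V &
   exists gamma : R, [/\ 0 < gamma, gamma < 1 &
     forall x, feasible G x ->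
       exists y, [/\ feasible G y, G x y & (V y <= gamma%:E * V x)%E]]].

Definition strong_lyapunov (G : setmap) (V : vec -> \bar R) : Prop :=
  [/\ in_calV V, pos_def_wrt (feasible G) V &
   exists gamma : R, [/\ 0 < gamma, gamma < 1 &
     forall x y, feasible G x -> feasible G y -> G x y ->
       (V y <= gamma%:E * V x)%E]].

End Defs.

(* Main.v *)
Require Import Defs.
From HB Require Import structures.
From mathcomp Require Import all_boot all_order all_algebra.
From mathcomp Require Import all_classical all_reals all_analysis.
From mathcomp Require Import ring lra.
Import Order.TTheory GRing.Theory Num.Theory.
Import numFieldNormedType.Exports.
Local Open Scope classical_set_scope.
Local Open Scope ring_scope.

Section DotLemmas.
Variables (R : realType) (n : nat).
Notation vec := 'rV[R]_n.
Implicit Types x y z : vec.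

Lemma dotC x y : dot x y = dot y x.
Proof. by apply: eq_bigr => i _; rewrite mulrC. Qed.

Lemma dotDl x y z : dot (x + y) z = dot x z + dot y z.
Proof. by rewrite /dot -big_split; apply: eq_bigr => i _; rewrite mxE mulrDl. Qed.

Lemma dotZl (a : R) x z : dot (a *: x) z = a * dot x z.
Proof. by rewrite /dot mulr_sumr; apply: eq_bigr => i _; rewrite mxE mulrA. Qed.

Lemma dotZr (a : R) x z : dot z (a *: x) = a * dot z x.
Proof. by rewrite dotC dotZl dotC. Qed.

Lemma dot0r x : dot x 0 = 0.
Proof. by rewrite -(scale0r (0 : vec)) dotZr mul0r. Qed.

Lemma dot0l x : dot 0 x = 0.
Proof. by rewrite dotC dot0r. Qed.

Lemma dot_ge0 x : 0 <= dot x x.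
Proof. by apply: sumr_ge0 => i _; rewrite -expr2 sqr_ge0. Qed.

Lemma dot_coord_le x (j : 'I_n) : x 0 j * x 0 j <= dot x x.
Proof.
rewrite /dot (bigD1 j) //= lerDl; apply: sumr_ge0 => i _; rewrite -expr2 sqr_ge0.
by [].
Qed.

Lemma dot_bound (a : R) x y : 0 < a -> dot y x - a * dot x x <= dot y y / (4 * a).
Proof.
move=> a0; rewrite -subr_ge0.
have -> : dot y y / (4 * a) - (dot y x - a * dot x x) =
  \sum_(i < n) (y 0 i * y 0 i / (4 * a) - (y 0 i * x 0 i - a * (x 0 i * x 0 i))).
  by rewrite sumrB sumrB /dot mulr_suml mulr_sumr.
apply: sumr_ge0 => i _.
have -> : y 0 i * y 0 i / (4 * a) - (y 0 i * x 0 i - a * (x 0 i * x 0 i)) =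
  (y 0 i - 2 * a * x 0 i) ^+ 2 / (4 * a) by field; rewrite gt_eqF.
by rewrite divr_ge0 ?sqr_ge0 // ltW // mulr_gt0.
Qed.

Lemma cont_sum (T : topologicalType) (r : seq 'I_n) (F : 'I_n -> T -> R) :
  (forall i, continuous (F i)) -> continuous (fun t => \sum_(i <- r) F i t).
Proof.
move=> Fc; elim: r => [|i r IH].
  by under eq_fun do rewrite big_nil; apply: cst_continuous.
under eq_fun do rewrite big_cons.
by move=> t; apply: continuousD; [exact: Fc| exact: IH].
Qed.

Lemma dot_contl y : continuous (fun x : vec => dot x y).
Proof.
apply: cont_sum => i t; apply: continuousM; first exact: coord_continuous.
exact: cst_continuous.
Qed.

Lemma dot_cont_sq : continuous (fun x : vec => dot x x).
Proof.
apply: cont_sum => i t; apply: continuousM; exact: coord_continuous.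
Qed.

End DotLemmas.

Section Main.
Variables (R : realType) (n : nat) (H : setmap R n) (V : 'rV[R]_n -> \bar R).
Notation vec := 'rV[R]_n.
Local Notation F := (feasible H).
Local Notation Fd := (feasible (dual_process H)).
Hypothesis Hcp : convex_process H.
Hypothesis Hpol : polar F `&` closure Fd = [set 0].
Variables (alpha beta gamma : R).
Hypotheses (ha : 0 < alpha) (hab : alpha <= beta).
Hypothesis hV : forall x, F x -> ((alpha * dot x x)%:E <= V x)%E /\ (V x <= (beta * dot x x)%:E)%E.
Hypothesis V0 : V 0 = 0%E.
Hypothesis Vhom : forall (l : R) x, 0 <= l -> V (l *: x) = ((l ^+ 2)%:E * V x)%E.
Hypotheses (g0 : 0 < gamma) (g1 : gamma < 1).
Hypothesis hdec : forall x, F x -> exists y, [/\ F y, H x y & (V y <= gamma%:E * V x)%E].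

Lemma H00 : H 0 0.
Proof. by case: Hcp. Qed.

Lemma HZ x y (l : R) : H x y -> 0 <= l -> H (l *: x) (l *: y).
Proof. by case: Hcp => _ [hz _] hxy l0; exact: (hz (x, y) hxy l l0). Qed.

Lemma F0 : F 0.
Proof. by exists (fun _ => 0); split => // k; exact: H00. Qed.

Lemma FZ {x} {l : R} : F x -> 0 <= l -> F (l *: x).
Proof.
move=> [t [t0 ht]] l0; exists (fun k => l *: t k); split; first by rewrite t0.
by move=> k; exact: HZ.
Qed.

Lemma FdZ {p} {l : R} : Fd p -> 0 <= l -> Fd (l *: p).
Proof.
move=> [t [t0 ht]] l0; exists (fun k => l *: t k); split; first by rewrite t0.
by move=> k a b hab'; rewrite !dotZl; exact: (ler_wpM2l l0 (ht k a b hab')).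
Qed.

Let v x := fine (V x).

Lemma VE {x} : F x -> V x = (v x)%:E.
Proof.
move=> Fx; rewrite /v; move: (hV x Fx); case: (V x) => [r||] // [h1 h2]; by [move: h2 | move: h1]; rewrite /Order.le.
Qed.

Lemma v_bounds {x} : F x -> alpha * dot x x <= v x /\ v x <= beta * dot x x.
Proof. by move=> Fx; have := hV x Fx; rewrite VE // !lee_fin. Qed.

Lemma vZ (l : R) {x} : F x -> 0 <= l -> v (l *: x) = l ^+ 2 * v x.
Proof. by move=> Fx l0; rewrite /v Vhom // VE // -EFinM. Qed.

Lemma v0 : v 0 = 0.
Proof. by rewrite /v V0. Qed.

Let W := conjugate (restr_to V F).

Lemma W_ub y {x} : F x -> ((dot y x - v x)%:E <= W y)%E.
Proof.
move=> Fx; apply: ereal_sup_ubound; exists x => //.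
by rewrite /restr_to mem_set // VE // EFinB.
Qed.

Lemma W_le {y} {M : R} : (forall x, F x -> dot y x - v x <= M) -> (W y <= M%:E)%E.
Proof.
move=> h; apply: ge_ereal_sup => _ [x _ <-]; rewrite /restr_to.
case: ifPn => [/set_mem Fx|_]; first by rewrite VE // -EFinB lee_fin h.
by rewrite /= addeNy leNye.
Qed.

Lemma W_ge0 y : (0 <= W y)%E.
Proof. by have := W_ub y F0; rewrite dot0r v0 subr0. Qed.

Lemma W_upper y : (W y <= (dot y y / (4 * alpha))%:E)%E.
Proof.
apply: W_le => x Fx; have [h _] := v_bounds Fx.
have := @dot_bound _ _ alpha x y ha; lra.
Qed.

Let w y := fine (W y).

Lemma WE y : W y = (w y)%:E.
Proof.
rewrite /w; move: (W_ge0 y) (W_upper y); case: (W y) => [r||] //=.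
Qed.

Lemma w_ub y {x} : F x -> dot y x - v x <= w y.
Proof. by move=> Fx; have := W_ub y Fx; rewrite WE lee_fin. Qed.

Lemma w_le {y} {M} : (forall x, F x -> dot y x - v x <= M) -> w y <= M.
Proof. by move=> h; have := W_le h; rewrite WE lee_fin. Qed.

Lemma w_ge0 y : 0 <= w y.
Proof. by have := W_ge0 y; rewrite WE lee_fin. Qed.

Lemma w_upper y : w y <= dot y y / (4 * alpha).
Proof. by have := W_upper y; rewrite WE lee_fin. Qed.

Lemma w0 : w 0 = 0.
Proof.
apply/le_anti/andP; split; last exact: w_ge0.
by have := w_upper 0; rewrite dot0l mul0r.
Qed.

Lemma wZ (l : R) y : 0 <= l -> w (l *: y) = l ^+ 2 * w y.
Proof.
move=> l0; case: (eqVneq l 0) => [->|ln0].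
  by rewrite scale0r w0 expr2 !mul0r.
have lp : 0 < l by rewrite lt_def ln0.
have ll : 0 <= l * l by rewrite mulr_ge0.
apply/le_anti/andP; split.
  apply: w_le => x Fx; set z := l^-1 *: x.
  have Fz : F z by rewrite /z; apply: (FZ Fx); rewrite invr_ge0 ltW.
  have ex : x = l *: z by rewrite /z scalerA mulfV // scale1r.
  rewrite ex vZ // dotZl dotZr; have := w_ub y Fz; rewrite expr2; nra.
rewrite mulrC -ler_pdivlMr ?exprn_gt0 //; apply: w_le => x Fx.
rewrite ler_pdivlMr ?exprn_gt0 //.
have := w_ub (l *: y) (FZ Fx l0); rewrite vZ // dotZl dotZr expr2; lra.
Qed.

Lemma epi_closed : closed (epigraph W).
Proof.
have -> : epigraph W = \bigcap_(x in F)
    ((fun yt : vec * R => dot yt.1 x - v x - yt.2) @^-1` [set r : R | r <= 0]).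
  apply/seteqP; split => [[y t] /= h x Fx | [y t] /= h].
    move: h; rewrite /epigraph /= WE lee_fin => h.
    by have := w_ub y Fx; rewrite /=; lra.
  rewrite /epigraph /= WE lee_fin; apply: w_le => x Fx.
  by have := h x Fx; rewrite /=; lra.
apply: closed_bigI => x Fx; apply: preimage_closed; last exact: closed_le.
move=> yt _.
apply: (@continuousB _ _ _ (fun yt : vec * R => dot yt.1 x - v x) (fun yt => yt.2) yt); last exact: cvg_snd.
apply: (@continuousB _ _ _ (fun yt : vec * R => dot yt.1 x) (fun _ : vec * R => v x) yt); last exact: cst_continuous.
apply: (@continuous_comp _ _ _ (fun yt : vec * R => yt.1) (fun y : vec => dot y x) yt); first exact: cvg_fst.
exact: dot_contl.
Qed.

Lemma epi_convex : Defs.convex_set (epigraph W).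
Proof.
move=> [y1 t1] [y2 t2]; rewrite /epigraph /= !WE !lee_fin => h1 h2 l l0 l1.
rewrite /= WE lee_fin; apply: w_le => x Fx; rewrite dotDl !dotZl.
have e1 : l * (dot y1 x - v x) <= l * t1.
  exact: (ler_wpM2l l0 (le_trans (w_ub y1 Fx) h1)).
have e2 : (1 - l) * (dot y2 x - v x) <= (1 - l) * t2.
  by apply: (ler_wpM2l _ (le_trans (w_ub y2 Fx) h2)); rewrite subr_ge0.
rewrite -[l *: t1]/(l * t1) -[(1 - l) *: t2]/((1 - l) * t2); lra.
Qed.

Lemma key : exists2 c : R, 0 < c & forall p, Fd p ->
  exists x, [/\ F x, dot x x <= 1 & c * Num.sqrt (dot p p) <= dot p x].
Proof.
pose K := closure Fd `&` [set p : vec | dot p p = 1].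
pose f (k : nat) := \bigcup_(x in [set x | F x /\ dot x x <= 1])
   [set p : vec | k.+1%:R^-1 < dot p x].
have Kc : compact K.
  apply: bounded_closed_compact.
    exists 1; split; first exact: num_real.
    move=> M M1 p [_ pp] /=.
    apply: (le_trans _ (ltW M1)).
    rewrite /Num.norm /= mx_normrE; apply: bigmax_le => // -[i j] _ /=.
    have := @dot_coord_le _ _ p j; rewrite (pp : dot p p = 1) (ord1 i) => hj.
    by rewrite ler_norml; apply/andP; split; nra.
  apply: closedI; first exact: closed_closure.
  have -> : [set p : vec | dot p p = 1] = (fun p => dot p p) @^-1` [set r : R | r = 1] by [].
  apply: preimage_closed; last exact: closed_eq.
  by move=> p _; exact: dot_cont_sq.
have fo : forall k, [set: nat] k -> open (f k).
  move=> k _; apply: bigcup_open => x _.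
  apply: (open_comp (f := fun p : vec => dot p x) (D := [set r : R | k.+1%:R^-1 < r])).
    by move=> p _; exact: dot_contl.
  exact: open_gt.
have cov : K `<=` \bigcup_(k in [set: nat]) f k.
  move=> p [pcl pp]; have {}pp : dot p p = 1 := pp.
  have pn0 : p != 0.
    by apply/eqP => p0; move: pp; rewrite p0 dot0l => /esym/eqP; rewrite oner_eq0.
  have npol : ~ polar F p.
    move=> hp; have : (polar F `&` closure Fd) p by split.
    by rewrite Hpol => /= p0; rewrite p0 eqxx in pn0.
  have [x Fx hx] : exists2 x, F x & 0 < dot x p.
    apply: contra_notP npol => h y Fy; rewrite leNgt; apply/negP => hy; apply: h.
    by exists y.
  pose d := dot x x.
  have d0 : 0 <= d := @dot_ge0 _ _ x.
  pose x' := (1 + d)^-1 *: x.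
  have Fx' : F x' by apply: (FZ Fx); rewrite invr_ge0 addr_ge0.
  have hx'1 : dot x' x' <= 1.
    rewrite /x' dotZl dotZr -/d.
    have -> : (1 + d)^-1 * ((1 + d)^-1 * d) = d / (1 + d) ^+ 2.
      by field; rewrite gt_eqF //; lra.
    rewrite ler_pdivrMr ?exprn_gt0 //; [nra | lra].
  have hx'p : 0 < dot p x'.
    rewrite /x' dotZr dotC; apply: mulr_gt0 => //; rewrite invr_gt0; lra.
  set a := dot p x' in hx'p.
  exists (Num.trunc (a^-1)) => //; exists x' => //=.
  have := truncnS_gt (a^-1); set N := (Num.trunc _).+1%:R => hN.
  have Np : 0 < N by rewrite /N ltr0n.
  rewrite -(ltr_pM2l Np) mulfV ?gt_eqF //.
  have := hN; rewrite -(ltr_pM2l hx'p) mulfV ?gt_eqF // => h1.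
  by rewrite mulrC.
have := Kc; rewrite compact_cover => /(_ nat [set: nat] f fo cov) [D _ Dcov].
pose N := (\max_(k <- finmap.enum_fset D) k)%N.
exists N.+1%:R^-1; first by rewrite invr_gt0 ltr0n.
move=> p Fp; set s := Num.sqrt (dot p p).
case: (eqVneq s 0) => [s0|s0].
  by exists 0; split; [exact: F0 | rewrite dot0l ler01 | rewrite s0 mulr0 dot0r].
have sp : 0 < s by rewrite lt_def s0 sqrtr_ge0.
pose p' := s^-1 *: p.
have Kp' : K p'.
  split.
    by apply: subset_closure; apply: (FdZ Fp); rewrite invr_ge0 ltW.
  rewrite /p' /= dotZl dotZr -(sqr_sqrtr (@dot_ge0 _ _ p)) -/s.
  by field.
have [k Dk [x [Fx xx] hx]] := Dcov p' Kp'.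
exists x; split => //.
have kN : (k <= N)%N by apply: (leq_bigmax_seq (F := id)).
have hkN : N.+1%:R^-1 <= k.+1%:R^-1 :> R.
  by rewrite lef_pV2 ?posrE ?ltr0n // ler_nat ltnS.
move: hx; rewrite /= /p' dotZl => hx.
have : N.+1%:R^-1 < s^-1 * dot p x by apply: le_lt_trans hx.
rewrite mulrC -ler_pdivlMr // => /ltW.
by rewrite mulrC.
Qed.

Lemma W_posdef : pos_def_wrt Fd W.
Proof.
have [c c0 hc] := key.
have bp : 0 < beta by apply: lt_le_trans hab.
pose a1 := c ^+ 2 / (4 * beta).
pose b1 := (4 * alpha)^-1.
have a1p : 0 < a1 by rewrite /a1 divr_gt0 ?exprn_gt0 ?mulr_gt0.
have b1p : 0 < b1 by rewrite /b1 invr_gt0 mulr_gt0.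
exists (Num.min a1 b1), b1; split.
- by rewrite lt_min a1p b1p.
- by rewrite ge_min lexx orbT.
move=> p Fp; split; last first.
  by have := W_upper p; rewrite mulrC.
rewrite WE lee_fin.
apply: (le_trans (y := a1 * dot p p)).
  by apply: ler_wpM2r; [exact: dot_ge0 | rewrite ge_min lexx].
have [x [Fx xx hx]] := hc p Fp.
set s := Num.sqrt (dot p p) in hx.
have hs : s ^+ 2 = dot p p by rewrite sqr_sqrtr // dot_ge0.
have s0 : 0 <= s by rewrite sqrtr_ge0.
pose t := c * s / (2 * beta).
have t0 : 0 <= t by rewrite /t divr_ge0 ?mulr_ge0 // ltW // ?mulr_gt0.
have h3 : t * (c * s) - beta * (t * t) = a1 * s ^+ 2.
  by rewrite /t /a1; field; rewrite gt_eqF.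
have Ftx : F (t *: x) by apply: (FZ Fx).
have h := w_ub p Ftx; rewrite dotZr in h.
have [_ hv] := v_bounds Ftx; rewrite dotZl dotZr in hv.
have h1 : t * (c * s) <= t * dot p x by apply: ler_wpM2l.
have h2 : beta * (t * (t * dot x x)) <= beta * (t * t).
  apply: ler_wpM2l; first exact: ltW.
  rewrite mulrA -{2}(mulr1 (t * t)); apply: ler_wpM2l => //.
  exact: mulr_ge0.
rewrite -hs; clearbody t; lra.
Qed.

Lemma W_dec (x y : vec) : dual_process H x y -> (W y <= gamma%:E * W x)%E.
Proof.
move=> hxy; rewrite !WE -EFinM lee_fin; apply: w_le => a Fa.
have [b [Fb hb hVb]] := hdec a Fa.
rewrite !VE // -EFinM lee_fin in hVb.
have hyx := hxy a b hb.
pose z := gamma^-1 *: b.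
have Fz : F z by apply: (FZ Fb); rewrite invr_ge0 ltW.
have ez : b = gamma *: z by rewrite /z scalerA mulfV ?gt_eqF // scale1r.
rewrite ez dotZr in hyx.
rewrite ez (vZ _ Fz (ltW g0)) in hVb.
have h2 : gamma * v z <= v a.
  by move: hVb; rewrite expr2 -mulrA ler_pM2l.
have h3 : gamma * (dot x z - v z) <= gamma * w x.
  by apply: ler_wpM2l; [exact: ltW | exact: w_ub].
lra.
Qed.

Lemma main_res : strong_lyapunov (dual_process H) W.
Proof.
split.
- split.
  + exact: epi_closed.
  + exact: epi_convex.
  + by rewrite WE w0.
  + exact: W_ge0.
  + by move=> l y l0; rewrite !WE wZ // EFinM.
- exact: W_posdef.
- by exists gamma; split => // x y _ _; exact: W_dec.
Qed.

End Main.

Theorem theorem2 (R : realType) (n : nat) (H : setmap R n) (V : 'rV[R]_n -> \bar R) :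
  convex_process H -> closed_process H ->
  polar (feasible H) `&` closure (feasible (dual_process H)) = [set 0] ->
  weak_lyapunov H V ->
  strong_lyapunov (dual_process H) (conjugate (restr_to V (feasible H))).
Proof.
move=> Hcp _ Hpol [[_ _ V0 _ Vhom] [alpha [beta [ha hab hV]]] [gamma [g0 g1 hdec]]].
exact: (@main_res R n H V Hcp Hpol alpha beta gamma ha hab hV V0 Vhom g0 g1 hdec).
Qed.
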